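(* Let $(V,\omega)$ be a $2n$-dimensional real symplectic vector space with compatible complex structure $J$, and let $\lambda\in\mathbb R$. In the algebra $\mathcal W^{\mathrm{pol}}_\lambda\otimes\mathrm{End}(\Lambda)$, the element $A_\lambda$ satisfies \[ A_\lambda^2=Q_\lambda\otimes 1+1\otimes\lambda N, \] where $Q_\lambda$ is the polynomial $Q_\lambda(z)=\|z\|^2$ on $V^*$ and $N\in\mathrm{End}(\Lambda)$ acts on $\Lambda^kV^{1,0}$ as multiplication by $2k-n$.
   Context: $g(v,w)=\omega(v,Jw)$ is the induced inner product, used to identify $V\cong V^*$. $V^{1,0}$ is $V$ as a complex vector space ($i$ acts as $J$) with Hermitian form $h=g-i\omega$. $\Lambda=\Lambda^\bullet V^{1,0}$; for $z\in V^{1,0}$, $\varepsilon_z$ is exterior multiplication by $z$ and $\iota_z$ its adjoint (contraction), and $c(z)=\varepsilon_z+\iota_z$. $\mathcal W^{\mathrm{pol}}_\lambda$ is the algebra of complex polynomial functions on $V^*$ with the Moyal product $\#_\lambda$; viewing $v\in V$ as a linear function on $V^*$, it is generated by $V$ subject to $v\#_\lambda w=vw+\frac{i\lambda}{2}\omega(v,w)$ (equivalently, it is the complexified tensor algebra of $V$ modulo $v\otimes w-w\otimes v-i\lambda\omega(v,w)$, polynomials being identified with symmetric tensors). $A_\lambda\in \mathcal W^{\mathrm{pol}}_\lambda\otimes\mathrm{End}(\Lambda)$ is the linear function $A_\lambda(z)=c(z)$ on $V^*\cong V$; i.e. $A_\lambda=\sum_{j=1}^{2n}e_j\otimes c(e_j)$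 for a $g$-orthonormal real basis $e_1,\dots,e_{2n}$ of $V$. *)

(* Defs.v *)
From HB Require Import structures.
From mathcomp Require Import all_boot all_order all_algebra.
From mathcomp Require Import mpoly complex.
Set Implicit Arguments. Unset Strict Implicit. Unset Printing Implicit Defensive.
Import Order.TTheory GRing.Theory Num.Theory.
Local Open Scope ring_scope.
Local Open Scope complex_scope.

Section Defs.
Variable R : rcfType.
Local Notation C := (complex R).
Variable n : nat.
Local Notation m := (n.*2).

(* V = R^(2n) as column vectors; Om = Gram matrix of omega in the standard
   basis, J = matrix of the complex structure. *)
Definition omega (Om : 'M[R]_m) (v w : 'cV[R]_m) : R :=
  \sum_(a < m) \sum_(b < m) v a 0 * Om a b * w b 0.

Definition gform (Om J : 'M[R]_m) (v w : 'cV[R]_m) : R := omega Om v (J *m w).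

(* Hermitian form h = g - i omega on V^{1,0} (C-linear in the first slot) *)
Definition hform (Om J : 'M[R]_m) (v w : 'cV[R]_m) : C :=
  ((gform Om J v w)%:C - 'i * (omega Om v w)%:C)%C.

Definition compatible_symplectic (Om J : 'M[R]_m) : Prop :=
  [/\ Om^T = - Om, Om \in unitmx, J *m J = - 1%:M,
      (forall v w, omega Om (J *m v) (J *m w) = omega Om v w) &
      (forall v, v != 0 -> 0 < gform Om J v v)].

(* V^{1,0} ----------------
   Modelled on an h-orthonormal complex basis u_1..u_n of V^{1,0}: Lambda has
   the basis e_S = u_{s1} /\ ... /\ u_{sk} (S = {s1 < ... < sk}), which is
   orthonormal for the Hermitian product induced by h.  An endomorphism is
   represented by its matrix X S T = coefficient of e_S in X e_T. *)
Definition endL := {set 'I_n} -> {set 'I_n} -> C.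

Definition wsign (i : 'I_n) (S : {set 'I_n}) : C :=
  (-1) ^+ #|[set j in S | (j < i)%N]|.

Definition ext_u (i : 'I_n) : endL := fun S T =>
  if (i \notin T) && (S == i |: T) then wsign i T else 0.

Definition int_u (i : 'I_n) : endL := fun S T =>
  if (i \in T) && (S == T :\ i) then wsign i S else 0.

(* For z in V^{1,0}, z = sum_i h(z,u_i) u_i; eps_z is C-linear in z,
   iota_z (its adjoint) is C-antilinear in z; c(z) = eps_z + iota_z. *)
Definition cliff (Om J : 'M[R]_m) (u : 'I_n -> 'cV[R]_m) (z : 'cV[R]_m) : endL :=
  fun S T => \sum_(i < n) (hform Om J z (u i) * ext_u i S T
                           + conjc (hform Om J z (u i)) * int_u i S T).

Definition Nop : endL := fun S T =>
  if S == T then (#|S|.*2)%:R - n%:R else 0.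

(* ---------- The Weyl algebra W^pol_lambda ------------------------------
   Polynomial functions on V^*, in coordinates x_a(xi) = xi(eps_a) where eps_a
   is the standard basis of V = R^(2n); a vector v in V is the linear function
   sum_a v_a x_a. *)
Definition Wpol := {mpoly C[m]}.

Definition linp (v : 'cV[R]_m) : Wpol := \sum_(a < m) (v a 0)%:C *: 'X_a.

Fixpoint bidiff (Om : 'M[R]_m) (k : nat) (f g : Wpol) : Wpol :=
  match k with
  | 0 => f * g
  | k'.+1 => \sum_(a < m) \sum_(b < m)
               (Om a b)%:C *: bidiff Om k' (mderiv a f) (mderiv b g)
  end.

(* Moyal product: f # g = sum_k (i lambda/2)^k / k! B_k(f,g); the sum is finite
   since B_k(f,g) = 0 once k > deg f.  It satisfies
   v # w = v w + (i lambda/2) omega(v,w) for v, w in V. *)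
Definition moyal (Om : 'M[R]_m) (lam : R) (f g : Wpol) : Wpol :=
  \sum_(k < msize f)
     (((('i * lam%:C / 2%:R) ^+ k) / (k`!)%:R)%C *: bidiff Om k f g).

(* ---------- W^pol_lambda (x) End(Lambda) ----------------------------------
   Identified with End(Lambda)-matrices with entries in W^pol_lambda:
   (P (x) X)(P' (x) X') = (P # P') (x) X X'. *)
Definition WL := {set 'I_n} -> {set 'I_n} -> Wpol.

Definition WLmul (Om : 'M[R]_m) (lam : R) (A B : WL) : WL := fun S T =>
  \sum_(U : {set 'I_n}) moyal Om lam (A S U) (B U T).

Definition tens (P : Wpol) (X : endL) : WL := fun S T => X S T *: P.

Definition WLadd (A B : WL) : WL := fun S T => A S T + B S T.

Definition idL : endL := fun S T => if S == T then 1 else 0.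

(* A_lambda = sum_j e_j (x) c(e_j) for a g-orthonormal real basis e *)
Definition Aop (Om J : 'M[R]_m) (u : 'I_n -> 'cV[R]_m)
    (e : 'I_m -> 'cV[R]_m) : WL :=
  fun S T => \sum_(j < m) tens (linp (e j)) (cliff Om J u (e j)) S T.

Definition Gmat (Om J : 'M[R]_m) : 'M[R]_m :=
  \matrix_(a, b) gform Om J (delta_mx a 0) (delta_mx b 0).

(* Q(xi) = ||xi||^2 for the dual inner product on V^*:  Q = sum G^{-1}_{ab} x_a x_b *)
Definition Qpol (Om J : 'M[R]_m) : Wpol :=
  \sum_(a < m) \sum_(b < m) ((invmx (Gmat Om J)) a b)%:C *: ('X_a * 'X_b).

End Defs.

(* Main.v *)
Require Import Defs.
From HB Require Import structures.
From mathcomp Require Import all_boot all_order all_algebra.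
From mathcomp Require Import mpoly complex ring.
Import Order.TTheory GRing.Theory Num.Theory.
Local Open Scope ring_scope.
Local Open Scope complex_scope.

Set Implicit Arguments. Unset Strict Implicit. Unset Printing Implicit Defensive.



Section Poly.
Variable R : rcfType.
Local Notation C := (complex R).
Variable n : nat.
Local Notation m := (n.*2).
Local Notation Wp := (Wpol R n).

Definition lin (c : 'I_m -> C) : Wp := \sum_(a < m) c a *: 'X_a.

Lemma mderiv_lin a c : mderiv a (lin c) = (c a)%:MP.
Proof.
rewrite /lin raddf_sum /= (bigD1 a) //= big1 => [|b nba].
  rewrite addr0 mderivZ mderivX mnm1E eqxx scale1r.
  have -> : (U_(a) - U_(a))%MM = 0%MM by apply/mnmP => i; rewrite mnmBE mnm0E subnn.
  by rewrite mpolyX0 -alg_mpolyC.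
by rewrite mderivZ mderivX mnm1E (negbTE nba) scale0r scaler0.
Qed.

Lemma msize_lin c : (msize (lin c) <= 2)%N.
Proof.
apply: leq_trans (msize_sum _ _ _) _; apply/bigmax_leqP => a _.
by apply: leq_trans (msizeZ_le _ _) _; rewrite msizeX mdeg1.
Qed.

Lemma bidiff0 (Om : 'M[R]_m) k (g : Wp) : bidiff Om k 0 g = 0.
Proof.
elim: k g => [|k IH] g /=; first by rewrite mul0r.
by rewrite big1 // => a _; rewrite big1 // => b _; rewrite mderiv0 IH scaler0.
Qed.

Definition Bf (Om : 'M[R]_m) (c d : 'I_m -> C) : C :=
  \sum_(a < m) \sum_(b < m) (Om a b)%:C * c a * d b.

Lemma lin_eq0 c : (msize (lin c) <= 1)%N -> (forall a, c a = 0) /\ lin c = 0.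
Proof.
move=> h; have ca : forall a, c a = 0.
  move=> a; have := mderiv_lin a c; rewrite (msize1_polyC h) mderivC.
  by move=> /esym /eqP; rewrite mpolyC_eq0 => /eqP.
split=> //; rewrite /lin big1 // => a _; by rewrite ca scale0r.
Qed.

Lemma moyal_lin Om lam c d :
  moyal Om lam (lin c) (lin d) =
  lin c * lin d + ((('i%R * lam%:C / 2%:R) * Bf Om c d))%:MP.
Proof.
have := msize_lin c; rewrite leq_eqVlt ltnS => /orP[/eqP h2|h1].
  rewrite /moyal h2 !big_ord_recl big_ord0 /= addr0.
  rewrite expr0 fact0 divr1 scale1r expr1 divr1; congr (_ + _).
  rewrite /Bf -alg_mpolyC -[in RHS]scalerA; congr (_ *: _).
  rewrite alg_mpolyC rmorph_sum; apply: eq_bigr => a _.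
  rewrite rmorph_sum; apply: eq_bigr => b _.
  by rewrite !mderiv_lin -mpolyCM -mul_mpolyC -!mpolyCM mulrA.
have [ca ->] := lin_eq0 h1.
rewrite /moyal big1 ?mul0r ?add0r; last by move=> k _; rewrite bidiff0 scaler0.
rewrite /Bf big1 ?mulr0 ?mpolyC0 // => a _; rewrite big1 // => b _.
by rewrite ca mulr0 mul0r.
Qed.

End Poly.



Section Ops.
Variable R : rcfType.
Local Notation C := (complex R).
Variable n : nat.
Local Notation Ext := (@ext_u R n).
Local Notation Int := (@int_u R n).
Local Notation ws := (@wsign R n).

Definition mulE (X Y : endL R n) (S T : {set 'I_n}) : C :=
  \sum_(U : {set 'I_n}) X S U * Y U T.

Lemma wsignU (i l : 'I_n) (T : {set 'I_n}) : l \notin T ->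
  ws i (l |: T) = (if (l < i)%N then -1 else 1) * ws i T.
Proof.
move=> lT; rewrite /wsign; case: ltnP => li.
  have -> : [set j in l |: T | (j < i)%N] = l |: [set j in T | (j < i)%N].
    apply/setP => x; rewrite !inE; case: (eqVneq x l) => [->|] //=.
  by rewrite cardsU1 inE (negbTE lT) /= add1n exprS.
have -> : [set j in l |: T | (j < i)%N] = [set j in T | (j < i)%N].
  apply/setP => x; rewrite !inE; case: (eqVneq x l) => [->|] //=.
  by rewrite ltnNge li (negbTE lT).
by rewrite mul1r.
Qed.

Lemma wsign2 (i : 'I_n) (T : {set 'I_n}) : ws i T * ws i T = 1.
Proof. by rewrite /wsign -exprMn mulrNN mulr1 expr1n. Qed.

Lemma mulE_ext X (l : 'I_n) (S T : {set 'I_n}) : mulE X (Ext l) S T =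
  if l \notin T then X S (l |: T) * ws l T else 0.
Proof.
rewrite /mulE /ext_u; case: ifP => lT /=.
  rewrite (bigD1 (l |: T)) //= eqxx big1 ?addr0 // => U /negbTE ->.
  by rewrite mulr0.
by rewrite big1 // => U _; rewrite mulr0.
Qed.

Lemma mulE_int X (l : 'I_n) (S T : {set 'I_n}) : mulE X (Int l) S T =
  if l \in T then X S (T :\ l) * ws l (T :\ l) else 0.
Proof.
rewrite /mulE /int_u; case: ifP => lT /=.
  rewrite (bigD1 (T :\ l)) //= eqxx big1 ?addr0 // => U /negbTE ->.
  by rewrite mulr0.
by rewrite big1 // => U _; rewrite mulr0.
Qed.

Lemma ltn_cases (i l : 'I_n) : i != l ->
  ((i < l)%N /\ ~~ (l < i)%N) \/ ((l < i)%N /\ ~~ (i < l)%N).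
Proof.
move=> nil; case: (ltngtP i l) => h; [left|right|] => //.
by move/negP: nil; case; apply/eqP/val_inj.
Qed.

Lemma car_EE (i l : 'I_n) (S T : {set 'I_n}) : mulE (Ext i) (Ext l) S T + mulE (Ext l) (Ext i) S T = 0.
Proof.
rewrite !mulE_ext /ext_u.
case: (eqVneq i l) => [<-|nil].
  by rewrite !in_setU1 eqxx /= !mul0r !if_same addr0.
rewrite !in_setU1 (negbTE nil) (eq_sym l i) (negbTE nil) /=.
case: (boolP (l \in T)) => lT; case: (boolP (i \in T)) => iT /=;
  rewrite ?mul0r ?add0r ?addr0 //.
rewrite [l |: (i |: T)]setUCA.
case: eqP => _; last by rewrite !mul0r addr0.
rewrite (wsignU i lT) (wsignU l iT).
by case: (ltn_cases nil) => -[-> /negbTE ->]; ring.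
Qed.

Lemma car_II (i l : 'I_n) (S T : {set 'I_n}) : mulE (Int i) (Int l) S T + mulE (Int l) (Int i) S T = 0.
Proof.
rewrite !mulE_int /int_u.
case: (eqVneq i l) => [<-|nil].
  by rewrite !in_setD1 eqxx /= !mul0r !if_same addr0.
rewrite !in_setD1 (negbTE nil) (eq_sym l i) (negbTE nil) /=.
case: (boolP (l \in T)) => lT; case: (boolP (i \in T)) => iT /=;
  rewrite ?mul0r ?add0r ?addr0 //.
set A := T :\ i :\ l.
have eA : T :\ l :\ i = A.
  by apply/setP => x; rewrite !inE; case: (x == i); case: (x == l).
have iA : i \notin A by rewrite !inE eqxx andbF.
have lA : l \notin A by rewrite !inE eqxx.
have Tl : T :\ l = i |: A.
  apply/setP => x; rewrite !inE; case: (eqVneq x i) => [->|] /=.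
    by rewrite iT nil.
  by case: (x == l).
have Ti : T :\ i = l |: A.
  apply/setP => x; rewrite !inE; case: (eqVneq x l) => [->|] /=.
    by rewrite lT eq_sym nil.
  by case: (x == i).
rewrite eA; case: eqP => [?|_]; try subst S; last by rewrite !mul0r addr0.
rewrite Tl Ti (wsignU l iA) (wsignU i lA).
by case: (ltn_cases nil) => -[-> /negbTE ->]; ring.
Qed.

Lemma car_EI (i l : 'I_n) (S T : {set 'I_n}) : mulE (Ext i) (Int l) S T + mulE (Int l) (Ext i) S T
  = (i == l)%:R * (S == T)%:R.
Proof.
rewrite mulE_int mulE_ext /ext_u /int_u.
case: (eqVneq i l) => [<-|nil].
  rewrite !in_setD1 !in_setU1 eqxx /= mul1r.
  case: (boolP (i \in T)) => iT /=.
    rewrite (setD1K iT) addr0. case: eqP => [?|_]; try subst S; last by rewrite mul0r.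
    by rewrite wsign2.
  rewrite (setU1K iT) add0r; case: eqP => [?|_]; try subst S; last by rewrite mul0r.
  by rewrite wsign2.
rewrite mul0r in_setD1 in_setU1 (negbTE nil) (eq_sym l i) (negbTE nil) /=.
case: (boolP (l \in T)) => lT; case: (boolP (i \in T)) => iT /=;
  rewrite ?mul0r ?add0r ?addr0 //.
set A := T :\ l.
have iA : i \notin A by rewrite !inE negb_and iT orbT.
have lA : l \notin A by rewrite !inE eqxx.
have TA : T = l |: A by rewrite /A setD1K.
have e2 : (i |: T) :\ l = i |: A.
  apply/setP => x; rewrite !inE; case: (eqVneq x i) => [->|] //=.
  by rewrite nil.
rewrite e2; case: eqP => [?|_]; try subst S; last by rewrite !mul0r addr0.
rewrite [in ws i T]TA (wsignU i lA) (wsignU l iA).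
by case: (ltn_cases nil) => -[-> /negbTE ->]; ring.
Qed.

Lemma EI_diag (i : 'I_n) (S T : {set 'I_n}) : mulE (Ext i) (Int i) S T = (S == T)%:R * (i \in S)%:R.
Proof.
rewrite mulE_int /ext_u !in_setD1 eqxx /=.
case: (boolP (i \in T)) => iT; rewrite ?(setD1K iT); case: eqP => [?|_]; try subst S;
  rewrite /= ?wsign2 ?iT ?(negbTE iT) ?mul0r ?mulr0 ?mul1r //.
Qed.

Lemma IE_diag (i : 'I_n) (S T : {set 'I_n}) : mulE (Int i) (Ext i) S T = (S == T)%:R * (i \notin S)%:R.
Proof.
rewrite mulE_ext /int_u !in_setU1 eqxx /=.
case: (boolP (i \in T)) => iT /=.
  by case: (eqVneq S T) => [->|_]; rewrite ?iT ?mulr0 ?mul0r.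
rewrite (setU1K iT); case: eqP => [?|_]; try subst S;
  rewrite /= ?wsign2 ?iT ?(negbTE iT) ?mul0r ?mulr0 ?mul1r //.
Qed.

Lemma N_sum (S T : {set 'I_n}) : \sum_(i < n) (mulE (Int i) (Ext i) S T - mulE (Ext i) (Int i) S T)
  = - Nop R S T.
Proof.
rewrite /Nop; under eq_bigr => i _ do rewrite IE_diag EI_diag -mulrBr.
rewrite -mulr_sumr; case: (eqVneq S T) => [_|_]; last by rewrite mul0r oppr0.
rewrite mul1r.
have cS : \sum_(i < n) ((i \in S)%:R : C) = #|S|%:R.
  rewrite (eq_bigr (fun i => if i \in S then 1 else 0)); last by move=> i _; case: (i \in S).
  by rewrite -big_mkcond sumr_const.
have cN : \sum_(i < n) ((i \notin S)%:R : C) = n%:R - #|S|%:R.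
  rewrite -cS -[n in n%:R]card_ord -sumr_const -sumrB; apply: eq_bigr => i _.
  by case: (i \in S); rewrite ?subrr ?subr0.
rewrite sumrB cS cN -addnn natrD; ring.
Qed.

End Ops.



Lemma quadE (R : rcfType) N k1 k2 (M : 'M[R]_N) (v : 'M[R]_(N,k1)) (w : 'M[R]_(N,k2)) j l :
  (v^T *m M *m w) j l = \sum_a \sum_b v a j * M a b * w b l.
Proof.
rewrite [RHS]exchange_big mxE; apply: eq_bigr => b _.
by rewrite mxE mulr_suml; apply: eq_bigr => a _; rewrite !mxE.
Qed.

Lemma orth_inv (R : rcfType) N k (G : 'M[R]_N) (X : 'M[R]_(N,k)) :
  k = N -> X^T *m G *m X = 1%:M -> G *m (X *m X^T) = 1%:M.
Proof.
move=> ek; subst k => h.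
by rewrite mulmxA; apply: mulmx1C; rewrite mulmxA.
Qed.

Lemma ii (R : rcfType) : 'i%R = (Complex 0 1) :> R[i].
Proof. reflexivity. Qed.
Lemma i2 (R : rcfType) : 'i%R * 'i%R = -1 :> R[i].
Proof. by rewrite -expr2 sqrCi. Qed.
Lemma ci (R : rcfType) : conjc 'i%R = - 'i%R :> R[i].
Proof. rewrite ii. by apply/eqP; rewrite eq_complex /= oppr0 !eqxx. Qed.

Lemma hconj (R : rcfType) (x y : R) : conjc (x%:C - 'i%R * y%:C) = x%:C + 'i%R * y%:C.
Proof.
rewrite ii; apply/eqP; rewrite eq_complex /=.
by rewrite ?mul0r ?mul1r ?mulr0 ?subr0 ?add0r ?sub0r ?oppr0 ?opprK ?addr0 ?eqxx. 
Qed.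

Section LA.
Variable R : rcfType.
Local Notation C := (complex R).
Variable n : nat.
Local Notation m := (n.*2).
Variables (Om J : 'M[R]_m) (u : 'I_n -> 'cV[R]_m) (e : 'I_m -> 'cV[R]_m).
Hypothesis hOJ : compatible_symplectic Om J.
Hypothesis hu : forall i k, hform Om J (u i) (u k) = (i == k)%:R.
Hypothesis he : forall j k, gform Om J (e j) (e k) = (j == k)%:R.

Lemma hJJ : J *m J = - 1%:M. Proof. by case: hOJ. Qed.
Lemma hJinv (v w : 'cV[R]_m) : omega Om (J *m v) (J *m w) = omega Om v w. Proof. by case: hOJ. Qed.

Definition Gm := locked (Om *m J).
Local Notation G := Gm.

Lemma omegaE (v w : 'cV[R]_m) : omega Om v w = (v^T *m Om *m w) 0 0.
Proof. by rewrite quadE. Qed.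
Lemma gformE (v w : 'cV[R]_m) : gform Om J v w = (v^T *m G *m w) 0 0.
Proof. by rewrite /gform omegaE /Gm -lock !mulmxA. Qed.

Lemma hu_parts i l : gform Om J (u i) (u l) = (i == l)%:R /\ omega Om (u i) (u l) = 0.
Proof.
move: (hu i l); rewrite /hform ii => /eqP; rewrite eq_complex /=.
case: (i == l) => /=; rewrite ?mulr0 ?mul0r ?mulr1 ?mul1r ?subr0 ?add0r ?addr0 ?oppr0;
  by case/andP => /eqP ->; rewrite oppr_eq0 => /eqP.
Qed.

Lemma g_uu i l : gform Om J (u i) (u l) = (i == l)%:R. Proof. by case: (hu_parts i l). Qed.
Lemma w_uu i l : omega Om (u i) (u l) = 0. Proof. by case: (hu_parts i l). Qed.

Lemma omegaNr (v w : 'cV[R]_m) : omega Om v (- w) = - omega Om v w.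
Proof. by rewrite !omegaE mulmxN mxE. Qed.
Lemma omegaNl (v w : 'cV[R]_m) : omega Om (- v) w = - omega Om v w.
Proof. by rewrite !omegaE linearN /= mulNmx mulNmx mxE. Qed.
Lemma JJv (v : 'cV[R]_m) : J *m (J *m v) = - v.
Proof. by rewrite mulmxA hJJ mulNmx mul1mx. Qed.

Lemma g_uJu i l : gform Om J (u i) (J *m u l) = 0.
Proof. by rewrite /gform JJv omegaNr w_uu oppr0. Qed.
Lemma g_Juu i l : gform Om J (J *m u i) (u l) = 0.
Proof. by rewrite /gform hJinv w_uu. Qed.
Lemma g_JuJu i l : gform Om J (J *m u i) (J *m u l) = (i == l)%:R.
Proof. by rewrite /gform hJinv -g_uu. Qed.
Lemma w_uJu i l : omega Om (u i) (J *m u l) = (i == l)%:R.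
Proof. exact: g_uu. Qed.
Lemma w_Juu i l : omega Om (J *m u i) (u l) = - (i == l)%:R.
Proof. by rewrite -hJinv JJv omegaNl -g_uu. Qed.
Lemma w_JuJu i l : omega Om (J *m u i) (J *m u l) = 0.
Proof. by rewrite hJinv w_uu. Qed.

Definition Emx : 'M[R]_m := \matrix_(a, j) e j a 0.

Lemma qcol k1 k2 (X : 'M[R]_(m,k1)) (Y : 'M[R]_(m,k2)) i l :
  (X^T *m G *m Y) i l = gform Om J (col i X) (col l Y).
Proof.
rewrite gformE !quadE; apply: eq_bigr => a _; apply: eq_bigr => b _.
by rewrite !mxE.
Qed.

Lemma col_E j : col j Emx = e j.
Proof. by apply/colP => a; rewrite !mxE. Qed.

Lemma EtGE : Emx^T *m G *m Emx = 1%:M.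
Proof. by apply/matrixP => j l; rewrite qcol !col_E he mxE. Qed.

Lemma GGi : G *m (Emx *m Emx^T) = 1%:M.
Proof. exact: orth_inv EtGE. Qed.
Lemma GiG : Emx *m Emx^T *m G = 1%:M.
Proof. exact: mulmx1C GGi. Qed.

Lemma ematE (M : 'M[R]_m) (v : 'cV[R]_m) (j : 'I_m) : ((e j)^T *m M *m v) 0 0 = (Emx^T *m M *m v) j 0.
Proof. by rewrite !quadE; apply: eq_bigr => a _; apply: eq_bigr => b _; rewrite !mxE. Qed.

Lemma R1 (v : 'cV[R]_m) (a : 'I_m) : \sum_j gform Om J (e j) v * e j a 0 = v a 0.
Proof.
transitivity ((Emx *m (Emx^T *m G *m v)) a 0).
  rewrite mxE; apply: eq_bigr => j _; rewrite mulrC gformE ematE.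
  by congr (_ * _); rewrite /Emx mxE.
by rewrite !mulmxA GiG mul1mx.
Qed.

Lemma R2 (v : 'cV[R]_m) (a : 'I_m) : \sum_j omega Om (e j) v * e j a 0 = - (J *m v) a 0.
Proof.
transitivity ((Emx *m (Emx^T *m Om *m v)) a 0).
  rewrite mxE; apply: eq_bigr => j _; rewrite mulrC omegaE ematE.
  by congr (_ * _); rewrite /Emx mxE.
have hOm : Om = - (G *m J) by rewrite /Gm -lock -mulmxA hJJ mulmxN mulmx1 opprK.
rewrite {1}hOm !mulmxA mulmxN !mulNmx !mulmxA GiG mul1mx.
by rewrite mxE.
Qed.

Definition Umx : 'M[R]_(m, n) := \matrix_(a, i) u i a 0.
Definition Pmx : 'M[R]_(m, n + n) := row_mx Umx (J *m Umx).

Lemma col_U i : col i Umx = u i.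
Proof. by apply/colP => a; rewrite !mxE. Qed.
Lemma col_JU i : col i (J *m Umx) = J *m u i.
Proof. by rewrite colE -mulmxA -colE col_U. Qed.

Lemma PtGP : Pmx^T *m G *m Pmx = 1%:M.
Proof.
rewrite /Pmx tr_row_mx mul_col_mx mul_col_row scalar_mx_block.
congr block_mx; apply/matrixP => i l; rewrite qcol ?col_U ?col_JU !mxE.
- exact: g_uu.
- exact: g_uJu.
- exact: g_Juu.
- exact: g_JuJu.
Qed.

Lemma PPt : Pmx *m Pmx^T = Emx *m Emx^T.
Proof.
have h1 := @orth_inv R m (n + n) Gm Pmx (addnn n) PtGP.
have [uG _] := mulmx1_unit h1.
by rewrite -(mulKmx uG (Pmx *m Pmx^T)) h1 -[in RHS](mulKmx uG (Emx *m Emx^T)) GGi.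
Qed.

Lemma R3 a b : \sum_i (u i a 0 * u i b 0 + (J *m u i) a 0 * (J *m u i) b 0)
  = (Emx *m Emx^T) a b.
Proof.
rewrite -PPt /Pmx tr_row_mx mul_row_col mxE big_split /= !mxE.
congr (_ + _); apply: eq_bigr => i _; rewrite !mxE //.
by congr (_ * _); apply: eq_bigr => j _; rewrite /Umx mxE.
Qed.

Lemma Gmat_eq : Gmat Om J = Gm.
Proof.
apply/matrixP => a b; rewrite mxE gformE trmx_delta -rowE -colE.
by rewrite !mxE.
Qed.

Lemma invG : invmx (Gmat Om J) = Emx *m Emx^T.
Proof.
rewrite Gmat_eq; have [uG _] := mulmx1_unit GGi.
by rewrite -[in RHS](mulKmx uG (Emx *m Emx^T)) GGi mulmx1.
Qed.

Definition w i a : C := (u i a 0)%:C + 'i%R * ((J *m u i) a 0)%:C.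
Definition wb i a : C := (u i a 0)%:C + - 'i%R * ((J *m u i) a 0)%:C.

Lemma C1 i a : \sum_j hform Om J (e j) (u i) * (e j a 0)%:C = w i a.
Proof.
rewrite /hform.
transitivity ((\sum_j gform Om J (e j) (u i) * e j a 0)%:C
   - 'i%R * (\sum_j omega Om (e j) (u i) * e j a 0)%:C).
  rewrite !rmorph_sum mulr_sumr -sumrB; apply: eq_bigr => j _; rewrite !rmorphM; ring.
by rewrite R1 R2 rmorphN mulrN opprK.
Qed.

Lemma C2 i a : \sum_j conjc (hform Om J (e j) (u i)) * (e j a 0)%:C = wb i a.
Proof.
rewrite /hform; under eq_bigr => j _ do rewrite hconj.
transitivity ((\sum_j gform Om J (e j) (u i) * e j a 0)%:C
   + 'i%R * (\sum_j omega Om (e j) (u i) * e j a 0)%:C).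
  rewrite !rmorph_sum mulr_sumr -big_split /=; apply: eq_bigr => j _.
  rewrite !rmorphM; ring.
by rewrite R1 R2 rmorphN mulrN /wb mulNr.
Qed.

Lemma Bri (x y z t : 'cV[R]_m) (s1 s2 : C) :
  Bf Om (fun a => (x a 0)%:C + s1 * (y a 0)%:C) (fun b => (z b 0)%:C + s2 * (t b 0)%:C)
  = (omega Om x z)%:C + s2 * (omega Om x t)%:C + s1 * (omega Om y z)%:C
    + s1 * s2 * (omega Om y t)%:C.
Proof.
rewrite /Bf /omega !rmorph_sum !mulr_sumr -!big_split /=; apply: eq_bigr => a _.
rewrite !rmorph_sum !mulr_sumr -!big_split /=; apply: eq_bigr => b _.
rewrite !rmorphM; ring.
Qed.

Lemma B_ww i l : Bf Om (w i) (w l) = 0.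
Proof. by rewrite /w Bri w_uu w_uJu w_Juu w_JuJu rmorphN !rmorph0; ring. Qed.
Lemma B_wbwb i l : Bf Om (wb i) (wb l) = 0.
Proof. by rewrite /wb Bri w_uu w_uJu w_Juu w_JuJu rmorphN !rmorph0; ring. Qed.
Lemma B_wwb i l : Bf Om (w i) (wb l) = - (2%:R * 'i%R) * ((i == l)%:R)%:C.
Proof. by rewrite /w /wb Bri w_uu w_uJu w_Juu w_JuJu rmorphN !rmorph0; ring. Qed.
Lemma B_wbw i l : Bf Om (wb i) (w l) = (2%:R * 'i%R) * ((i == l)%:R)%:C.
Proof. by rewrite /w /wb Bri w_uu w_uJu w_Juu w_JuJu rmorphN !rmorph0; ring. Qed.

Lemma C4 a b : \sum_i (w i a * wb i b + wb i a * w i b)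
  = 2%:R * ((Emx *m Emx^T) a b)%:C.
Proof.
rewrite -R3 rmorph_sum mulr_sumr; apply: eq_bigr => i _.
rewrite /w /wb rmorphD !rmorphM; have h := i2 R; ring: h.
Qed.

End LA.



Section Gen.
Variable R : rcfType.
Local Notation C := (complex R).
Variable n : nat.
Local Notation m := (n.*2).
Local Notation Wp := (Wpol R n).
Variable K : finType.

Lemma lin_comb (x : K -> C) (v : K -> 'I_m -> C) :
  lin (fun a => \sum_k x k * v k a) = \sum_k x k *: lin (v k).
Proof.
rewrite /lin; under eq_bigr => a _ do rewrite scaler_suml.
rewrite exchange_big; apply: eq_bigr => k _; rewrite scaler_sumr.
by apply: eq_bigr => a _; rewrite scalerA.
Qed.

Lemma lin_mul (c d : 'I_m -> C) :
  lin c * lin d = \sum_a \sum_b (c a * d b) *: ('X_a * 'X_b).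
Proof.
rewrite /lin mulr_suml; apply: eq_bigr => a _; rewrite mulr_sumr.
by apply: eq_bigr => b _; rewrite -scalerAl -scalerAr scalerA.
Qed.

Lemma prod_comb (F G : K -> endL R n) (p : K -> Wp) S T :
  \sum_U (\sum_k F k S U *: p k) * (\sum_k G k U T *: p k)
  = \sum_k \sum_k' mulE (F k) (G k') S T *: (p k * p k').
Proof.
transitivity (\sum_U \sum_k \sum_k' (F k S U * G k' U T) *: (p k * p k')).
  apply: eq_bigr => U _; rewrite mulr_suml; apply: eq_bigr => k _.
  rewrite mulr_sumr; apply: eq_bigr => k' _.
  by rewrite -scalerAl -scalerAr scalerA.
rewrite exchange_big; apply: eq_bigr => k _; rewrite exchange_big.
by apply: eq_bigr => k' _; rewrite /mulE scaler_suml.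
Qed.

Lemma Bf_comb Om (x y : K -> C) (v : K -> 'I_m -> C) :
  Bf Om (fun a => \sum_k x k * v k a) (fun b => \sum_k y k * v k b)
  = \sum_k \sum_k' x k * y k' * Bf Om (v k) (v k').
Proof.
rewrite /Bf.
transitivity (\sum_a \sum_b \sum_k \sum_k'
   x k * y k' * ((Om a b)%:C * v k a * v k' b)).
  apply: eq_bigr => a _; apply: eq_bigr => b _.
  rewrite -mulrA mulr_suml mulr_sumr; apply: eq_bigr => k _.
  rewrite !mulr_sumr; apply: eq_bigr => k' _; ring.
under eq_bigr => a _ do rewrite exchange_big.
rewrite exchange_big; apply: eq_bigr => k _.
under eq_bigr => a _ do rewrite exchange_big.
rewrite exchange_big; apply: eq_bigr => k' _.
rewrite mulr_sumr; apply: eq_bigr => a _.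
by rewrite mulr_sumr.
Qed.

Lemma Bf_comb2 Om (F : K -> endL R n) (v : K -> 'I_m -> C) S T :
  \sum_U Bf Om (fun a => \sum_k F k S U * v k a) (fun b => \sum_k F k U T * v k b)
  = \sum_k \sum_k' mulE (F k) (F k') S T * Bf Om (v k) (v k').
Proof.
under eq_bigr => U _ do rewrite Bf_comb.
rewrite exchange_big; apply: eq_bigr => k _; rewrite exchange_big.
by apply: eq_bigr => k' _; rewrite /mulE mulr_suml.
Qed.

End Gen.

Section Main.
Variable R : rcfType.
Local Notation C := (complex R).
Variable n : nat.
Local Notation m := (n.*2).
Local Notation Wp := (Wpol R n).
Variables (Om J : 'M[R]_m) (lam : R) (u : 'I_n -> 'cV[R]_m) (e : 'I_m -> 'cV[R]_m).
Hypothesis hOJ : compatible_symplectic Om J.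
Hypothesis hu : forall i k, hform Om J (u i) (u k) = (i == k)%:R.
Hypothesis he : forall j k, gform Om J (e j) (e k) = (j == k)%:R.
Local Notation K := (bool * 'I_n)%type.

Definition op (k : K) : endL R n := if k.1 then ext_u R k.2 else int_u R k.2.
Definition vk (k : K) : 'I_m -> C := if k.1 then w J u k.2 else wb J u k.2.
Definition flip (k : K) : K := (~~ k.1, k.2).

Lemma A_lin S U : Aop Om J u e S U = lin (fun a => \sum_k op k S U * vk k a).
Proof.
rewrite /Aop /tens /linp /lin.
under eq_bigr => j _ do rewrite scaler_sumr.
rewrite exchange_big; apply: eq_bigr => a _.
under eq_bigr => j _ do rewrite scalerA.
rewrite -scaler_suml; congr (_ *: _).
transitivity (\sum_(b : bool) \sum_(i < n) op (b, i) S U * vk (b, i) a); last first.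
  by rewrite pair_bigA; apply: eq_bigr => -[b i] _.
rewrite big_bool /= /cliff.
under eq_bigr => j _ do rewrite mulr_suml.
rewrite exchange_big -big_split; apply: eq_bigr => i _.
rewrite /op /vk [RHS]/=.
rewrite -(C1 u hOJ he i a) -(C2 u hOJ he i a) !mulr_sumr -big_split /=.
by apply: eq_bigr => j _; ring.
Qed.

Lemma car_op k k' S T :
  mulE (op k) (op k') S T + mulE (op k') (op k) S T = (k' == flip k)%:R * (S == T)%:R.
Proof.
case: k => [[] i]; case: k' => [[] l]; rewrite /op /flip /=.
- by rewrite car_EE mul0r.
- by rewrite car_EI eq_sym.
- by rewrite addrC car_EI.
- by rewrite car_II mul0r.
Qed.

Definition sg (k : K) : C := if k.1 then - (2%:R * 'i%R) else 2%:R * 'i%R.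

Lemma Bf_op k k' : Bf Om (vk k) (vk k') = (k' == flip k)%:R * sg k.
Proof.
case: k => [[] i]; case: k' => [[] l]; rewrite /vk /flip /sg /=.
- by rewrite (B_ww hOJ hu) mul0r.
- by rewrite (B_wwb hOJ hu) rmorph_nat eq_sym mulrC.
- by rewrite (B_wbw hOJ hu) rmorph_nat eq_sym mulrC.
- by rewrite (B_wbwb hOJ hu) mul0r.
Qed.

Lemma sum_flip (V : lmodType C) (k : K) (F : K -> V) :
  \sum_k' (k' == flip k)%:R *: F k' = F (flip k).
Proof.
rewrite (bigD1 (flip k)) //= eqxx scale1r big1 ?addr0 // => k' /negbTE ->.
by rewrite scale0r.
Qed.

Lemma sum_flipC (k : K) (F : K -> C) :
  \sum_k' (k' == flip k)%:R * F k' = F (flip k).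
Proof.
rewrite (bigD1 (flip k)) //= eqxx mul1r big1 ?addr0 // => k' /negbTE ->.
by rewrite mul0r.
Qed.

Lemma QQ : \sum_k lin (vk k) * lin (vk (flip k)) = 2%:R *: Qpol Om J.
Proof.
transitivity (\sum_(b : bool) \sum_(i < n) lin (vk (b, i)) * lin (vk (flip (b, i)))).
  by rewrite pair_bigA; apply: eq_bigr => -[b i] _.
rewrite big_bool /= -big_split /=.
transitivity (\sum_i \sum_a \sum_b
   (w J u i a * wb J u i b + wb J u i a * w J u i b) *: ('X_a * 'X_b : Wp)).
  apply: eq_bigr => i _; rewrite /vk /= !lin_mul -big_split; apply: eq_bigr => a _.
  by rewrite -big_split; apply: eq_bigr => b _; rewrite scalerDl.
rewrite exchange_big; under eq_bigr => a _ do rewrite exchange_big.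
rewrite /Qpol scaler_sumr; apply: eq_bigr => a _.
rewrite scaler_sumr; apply: eq_bigr => b _.
by rewrite -scaler_suml (C4 hOJ hu he) (invG he) scalerA.
Qed.

Lemma HP S T : \sum_k \sum_k' mulE (op k) (op k') S T *: (lin (vk k) * lin (vk k'))
  = (S == T)%:R *: Qpol Om J.
Proof.
set P := (LHS).
have sw : P = \sum_k \sum_k' mulE (op k') (op k) S T *: (lin (vk k) * lin (vk k')).
  rewrite /P exchange_big; apply: eq_bigr => k _; apply: eq_bigr => k' _.
  by rewrite mulrC.
have h2 : (2%:R : C) != 0 by rewrite pnatr_eq0.
apply: (scalerI h2).
rewrite [in LHS]scaler_nat [in LHS]mulr2n {2}sw -big_split /=.
under eq_bigr => k _ do rewrite -big_split /=.
under eq_bigr => k _ do under eq_bigr => k' _ do rewrite -scalerDl car_op -scalerA.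
under eq_bigr => k _ do rewrite sum_flip.
by rewrite -scaler_sumr QQ !scalerA mulrC.
Qed.

Lemma HB S T : \sum_k \sum_k' mulE (op k) (op k') S T * Bf Om (vk k) (vk k')
  = 2%:R * 'i%R * (- Nop R S T).
Proof.
under eq_bigr => k _ do under eq_bigr => k' _ do rewrite Bf_op mulrCA.
under eq_bigr => k _ do rewrite (sum_flipC k (fun k' => mulE (op k) (op k') S T * sg k)).
transitivity (\sum_(b : bool) \sum_(i < n)
   mulE (op (b, i)) (op (flip (b, i))) S T * sg (b, i)).
  by rewrite pair_bigA; apply: eq_bigr => -[b i] _.
rewrite big_bool /= -big_split /= -N_sum mulr_sumr; apply: eq_bigr => i _.
rewrite /op /sg /=; ring.
Qed.

Lemma main S T :
    WLmul Om lam (Aop Om J u e) (Aop Om J u e) S T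
    = WLadd (tens (Qpol Om J) (@idL R n))
            (tens 1 (fun S' T' => lam%:C * @Nop R n S' T')) S T.
Proof.
rewrite /WLmul.
under eq_bigr => U _ do rewrite !A_lin moyal_lin.
rewrite big_split /=.
have E1 : forall S U, lin (fun a => \sum_k op k S U * vk k a) = \sum_k op k S U *: lin (vk k).
  by move=> S0 U0; exact: (lin_comb (fun k => op k S0 U0) vk).
under eq_bigr => U _ do rewrite !E1.
rewrite (prod_comb op op (fun k => lin (vk k)) S T) HP.
rewrite -rmorph_sum -mulr_sumr (Bf_comb2 Om op vk S T) HB.
rewrite /WLadd /tens /idL; congr (_ + _); first by case: eqP.
rewrite alg_mpolyC /=; congr (_ %:MP).
have h := i2 R; have h2 : (2%:R : C) / 2%:R = 1 by rewrite divff // pnatr_eq0.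
ring: h h2.
Qed.

End Main.

Unset Implicit Arguments. Set Strict Implicit.

Theorem lemma3p1 (R : rcfType) (n : nat) (Om J : 'M[R]_(n.*2)) (lam : R)
    (u : 'I_n -> 'cV[R]_(n.*2)) (e : 'I_(n.*2) -> 'cV[R]_(n.*2)) :
  compatible_symplectic Om J ->
  (forall i k, hform Om J (u i) (u k) = (i == k)%:R) ->
  (forall j k, gform Om J (e j) (e k) = (j == k)%:R) ->
  let A := Aop Om J u e in
  forall S T,
    WLmul Om lam A A S T
    = WLadd (tens (Qpol Om J) (@idL R n))
            (tens 1 (fun S' T' => lam%:C * @Nop R n S' T')) S T.
Proof.
move=> hOJ hu he A S T.
exact: (main lam hOJ hu he S T).
Qed.
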